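(* Let $H$ be a finite-dimensional real Hilbert space and let $A = A_1 + A_2$, where $A_1, A_2: H\to H$ are linear operators with $A_1 = A_2^*$, and $A=A^*>0$. Let $\sigma\ge 1/4$, $\tau>0$, let $y^0,y^1\in H$ be arbitrary and $\varphi^n\in H$. Let $y^{n+1}$, $n\ge1$, be defined by the scheme $$G\,\frac{y^{n+1}-2y^n+y^{n-1}}{\tau^2} + A y^n = \varphi^n,\quad n=1,2,\dots,\qquad G = (E+\sigma\tau^2A_1)(E+\sigma\tau^2A_2).$$ Define $$R = E + \Big(\sigma-\frac14\Big)\tau^2 A + \sigma^2\tau^4 A_1A_2,\qquad \mathcal{E}_{n} = \left\|\frac{y^{n}+y^{n-1}}{2}\right\|_A^2 + \left\|\frac{y^{n}-y^{n-1}}{\tau}\right\|_{R}^2,\quad n\ge1 .$$ Then $R = R^* \ge E$, and for every $n\ge1$, regardless of $\tau$, $$\mathcal{E}_{n+1} \le \exp(\tau)\,\mathcal{E}_n + \exp(0.75\,\tau)\,\tau\,\|\varphi^n\|^2_{R^{-1}} .$$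
   Context: $H$ has scalar product $(\cdot,\cdot)$ and norm $\|y\|=(y,y)^{1/2}$; $A^*$ denotes the adjoint. For a self-adjoint positive definite operator $D$ on $H$, $\|y\|_D = (Dy,y)^{1/2}$; in particular $\|\varphi\|^2_{R^{-1}} = (R^{-1}\varphi,\varphi)$. $E$ denotes the identity operator on $H$, and $D_1\ge D_2$ means $(D_1y,y)\ge(D_2y,y)$ for all $y\in H$. *)

(* Defs.v *)
(* The finite-dimensional real Hilbert space H is modelled as R^n with the
   standard inner product; vectors are nat -> R (only indices < n matter),
   linear operators are n x n matrices nat -> nat -> R. *)
From Stdlib Require Import Reals ClassicalEpsilon.
Open Scope R_scope.

Definition vec := nat -> R.
Definition mat := nat -> nat -> R.

Fixpoint rsum (n : nat) (f : nat -> R) : R :=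
  match n with O => 0 | S k => rsum k f + f k end.

Definition ip (n : nat) (u v : vec) : R := rsum n (fun i => u i * v i).

Definition vadd (u v : vec) : vec := fun i => u i + v i.
Definition vsub (u v : vec) : vec := fun i => u i - v i.
Definition vscale (c : R) (u : vec) : vec := fun i => c * u i.

Definition mv (n : nat) (M : mat) (v : vec) : vec :=
  fun i => rsum n (fun j => M i j * v j).
Definition mm (n : nat) (M N : mat) : mat :=
  fun i j => rsum n (fun k => M i k * N k j).
Definition madd (M N : mat) : mat := fun i j => M i j + N i j.
Definition mscale (c : R) (M : mat) : mat := fun i j => c * M i j.
Definition ident : mat := fun i j => if Nat.eqb i j then 1 else 0.
Definition adj (M : mat) : mat := fun i j => M j i.

Definition veq (n : nat) (u v : vec) : Prop := forall i, (i < n)%nat -> u i = v i.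
Definition meq (n : nat) (M N : mat) : Prop :=
  forall i j, (i < n)%nat -> (j < n)%nat -> M i j = N i j.

Definition pos_def (n : nat) (D : mat) : Prop :=
  forall y : vec, (exists i, (i < n)%nat /\ y i <> 0) -> 0 < ip n (mv n D y) y.
Definition op_ge (n : nat) (D1 D2 : mat) : Prop :=
  forall y : vec, ip n (mv n D1 y) y >= ip n (mv n D2 y) y.

Definition normsq (n : nat) (D : mat) (y : vec) : R := ip n (mv n D y) y.

(* D^{-1} phi : a (the) solution w of D w = phi (chosen by epsilon) *)
Definition minv_apply (n : nat) (D : mat) (phi : vec) : vec :=
  epsilon (inhabits (fun _ : nat => 0)) (fun w => veq n (mv n D w) phi).

Definition normsq_inv (n : nat) (D : mat) (phi : vec) : R :=
  ip n (minv_apply n D phi) phi.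

Definition Gop (n : nat) (sigma tau : R) (A1 A2 : mat) : mat :=
  mm n (madd ident (mscale (sigma * tau ^ 2) A1))
       (madd ident (mscale (sigma * tau ^ 2) A2)).

Definition Rop (n : nat) (sigma tau : R) (A A1 A2 : mat) : mat :=
  madd (madd ident (mscale ((sigma - 1/4) * tau ^ 2) A))
       (mscale (sigma ^ 2 * tau ^ 4) (mm n A1 A2)).

Definition energy (n : nat) (tau : R) (A Rm : mat) (y : nat -> vec) (k : nat) : R :=
  normsq n A (vscale (1/2) (vadd (y k) (y (k - 1)%nat)))
  + normsq n Rm (vscale (/ tau) (vsub (y k) (y (k - 1)%nat))).

(* Main.v *)
Require Import Defs.
From Stdlib Require Import Reals.
Open Scope R_scope.

From mathcomp Require all_boot all_algebra Rstruct.
Module MX.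
Import all_boot all_algebra Rstruct.
Import GRing.Theory.
Local Open Scope ring_scope.

Lemma rsumE n f : rsum n f = \sum_(i < n) f i.
Proof.
elim: n => [|n IH] /=; first by rewrite big_ord0.
by rewrite big_ord_recr /= IH.
Qed.

Definition vec_of n (x : 'rV[R]_n) : vec :=
  fun j => match (insub j : option 'I_n) with Some o => x 0 o | None => 0 end.

Arguments vec_of {n}.
Lemma vec_ofE n (x : 'rV[R]_n) (o : 'I_n) : vec_of x o = x 0 o.
Proof. by rewrite /vec_of valK. Qed.

Lemma exists_sol n (M : mat) (b : vec) :
  (forall u : vec, veq n (mv n M u) (fun _ => 0%R) -> veq n u (fun _ => 0%R)) ->
  exists w, veq n (mv n M w) b.
Proof.
move=> Hinj.
pose Mx : 'M[R]_n := \matrix_(i, j) M (j : nat) (i : nat).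
have HmvE : forall (x : 'rV[R]_n) (o : 'I_n), mv n M (vec_of x) o = (x *m Mx) 0 o.
  move=> x o; rewrite /mv rsumE !mxE; apply: eq_bigr => l _.
  by rewrite vec_ofE mxE mulrC.
have Hfree : row_free Mx.
  rewrite -kermx_eq0; apply/eqP/row_matrixP => i; rewrite row0.
  set x := row i (kermx Mx).
  have Hx : x *m Mx = 0 by rewrite /x -row_mul mulmx_ker row0.
  apply/rowP => j.
  have H0 : forall o : 'I_n, (0 : 'rV[R]_n) 0 o = 0 by move=> o; rewrite mxE.
  rewrite H0 -vec_ofE.
  apply: (Hinj (vec_of x) _ j (ssrnat.ltP (ltn_ord j))).
  move=> l /ssrnat.ltP Hl; have -> : l = nat_of_ord (Ordinal Hl) by [].
  by rewrite HmvE Hx H0.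
have Hu : Mx \in unitmx by rewrite -row_free_unit.
pose brow : 'rV[R]_n := \row_j b (j : nat).
exists (vec_of (brow *m invmx Mx)).
move=> l /ssrnat.ltP Hl; have -> : l = nat_of_ord (Ordinal Hl) by [].
by rewrite HmvE -mulmxA mulVmx // mulmx1 mxE.
Qed.
End MX.

From Stdlib Require Import Lra Lia Classical ClassicalEpsilon FunctionalExtensionality.
Set Bullet Behavior "Strict Subproofs".

Lemma rsum_ext n f g : (forall i, (i<n)%nat -> f i = g i) -> rsum n f = rsum n g.
Proof. induction n; simpl; intros; auto. rewrite IHn, H; auto; intros; apply H; lia. Qed.
Lemma rsum_plus n f g : rsum n (fun i => f i + g i) = rsum n f + rsum n g.
Proof. induction n; simpl; [ring|]. rewrite IHn; ring. Qed.
Lemma rsum_scal n c f : rsum n (fun i => c * f i) = c * rsum n f.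
Proof. induction n; simpl; [ring|]. rewrite IHn; ring. Qed.
Lemma rsum_mulr n c f : rsum n (fun i => f i * c) = rsum n f * c.
Proof. induction n; simpl; [ring|]. rewrite IHn; ring. Qed.
Lemma rsum_zero n : rsum n (fun _ => 0) = 0.
Proof. induction n; simpl; [ring|]. rewrite IHn; ring. Qed.
Lemma rsum_swap n m f : rsum n (fun i => rsum m (fun j => f i j)) = rsum m (fun j => rsum n (fun i => f i j)).
Proof. induction n; simpl. now rewrite rsum_zero. rewrite IHn, rsum_plus. reflexivity. Qed.
Lemma rsum_nonneg n f : (forall i, (i<n)%nat -> 0 <= f i) -> 0 <= rsum n f.
Proof. induction n; simpl; intros; [lra|]. assert (0 <= f n) by (apply H; lia).
 assert (0 <= rsum n f) by (apply IHn; intros; apply H; lia). lra. Qed.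
Lemma rsum_eq0 n f : (forall i, (i<n)%nat -> 0 <= f i) -> rsum n f = 0 -> forall i, (i<n)%nat -> f i = 0.
Proof. induction n; simpl; intros; [lia|]. assert (0 <= f n) by (apply H; lia).
 assert (0 <= rsum n f) by (apply rsum_nonneg; intros; apply H; lia).
 destruct (Nat.eq_dec i n). subst; lra. apply IHn; [intros j Hj; apply H; lia|lra|lia]. Qed.
Lemma rsum_ident_aux m i f : (m <= i)%nat -> rsum m (fun k => ident i k * f k) = 0.
Proof. induction m; simpl; intros; [auto|]. rewrite IHm by lia. unfold ident.
 rewrite (proj2 (Nat.eqb_neq i m)) by lia. ring. Qed.
Lemma rsum_ident n i f : (i<n)%nat -> rsum n (fun k => ident i k * f k) = f i.
Proof. induction n; intros; [lia|]. simpl. destruct (Nat.eq_dec i n).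
 - subst. rewrite rsum_ident_aux by lia. unfold ident. rewrite Nat.eqb_refl. ring.
 - rewrite IHn by lia. unfold ident. rewrite (proj2 (Nat.eqb_neq i n)) by auto. ring. Qed.

Lemma ip_ext n u u' v v' : veq n u u' -> veq n v v' -> ip n u v = ip n u' v'.
Proof. intros H1 H2; unfold ip; apply rsum_ext; intros; rewrite H1, H2; auto. Qed.
Lemma ip_comm n u v : ip n u v = ip n v u.
Proof. unfold ip; apply rsum_ext; intros; ring. Qed.
Lemma ip_addl n u v w : ip n (vadd u v) w = ip n u w + ip n v w.
Proof. unfold ip, vadd; rewrite <- rsum_plus; apply rsum_ext; intros; ring. Qed.
Lemma ip_addr n u v w : ip n w (vadd u v) = ip n w u + ip n w v.
Proof. unfold ip, vadd; rewrite <- rsum_plus; apply rsum_ext; intros; ring. Qed.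
Lemma ip_subl n u v w : ip n (vsub u v) w = ip n u w - ip n v w.
Proof. unfold ip, vsub. replace (rsum n (fun i => u i * w i) - rsum n (fun i => v i * w i))
 with (rsum n (fun i => u i * w i) + (-1) * rsum n (fun i => v i * w i)) by ring.
 rewrite <- rsum_scal, <- rsum_plus; apply rsum_ext; intros; ring. Qed.
Lemma ip_subr n u v w : ip n w (vsub u v) = ip n w u - ip n w v.
Proof. rewrite ip_comm, ip_subl, (ip_comm n u), (ip_comm n v); auto. Qed.
Lemma ip_scalel n c u w : ip n (vscale c u) w = c * ip n u w.
Proof. unfold ip, vscale; rewrite <- rsum_scal; apply rsum_ext; intros; ring. Qed.
Lemma ip_scaler n c u w : ip n w (vscale c u) = c * ip n w u.
Proof. unfold ip, vscale; rewrite <- rsum_scal; apply rsum_ext; intros; ring. Qed.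
Lemma ip_self_nonneg n u : 0 <= ip n u u.
Proof. apply rsum_nonneg; intros; apply Rle_0_sqr. Qed.

Lemma mv_vadd n M u v : mv n M (vadd u v) = vadd (mv n M u) (mv n M v).
Proof. extensionality i; unfold mv, vadd; rewrite <- rsum_plus; apply rsum_ext; intros; ring. Qed.
Lemma mv_vscale n M c u : mv n M (vscale c u) = vscale c (mv n M u).
Proof. extensionality i; unfold mv, vscale; rewrite <- rsum_scal; apply rsum_ext; intros; ring. Qed.
Lemma mv_vsub n M u v : mv n M (vsub u v) = vsub (mv n M u) (mv n M v).
Proof. extensionality i; unfold mv, vsub.
 replace (rsum n (fun j => M i j * u j) - rsum n (fun j => M i j * v j))
 with (rsum n (fun j => M i j * u j) + (-1) * rsum n (fun j => M i j * v j)) by ring.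
 rewrite <- rsum_scal, <- rsum_plus; apply rsum_ext; intros; ring. Qed.
Lemma mv_madd n M N u : mv n (madd M N) u = vadd (mv n M u) (mv n N u).
Proof. extensionality i; unfold mv, vadd, madd; rewrite <- rsum_plus; apply rsum_ext; intros; ring. Qed.
Lemma mv_mscale n c M u : mv n (mscale c M) u = vscale c (mv n M u).
Proof. extensionality i; unfold mv, vscale, mscale; rewrite <- rsum_scal; apply rsum_ext; intros; ring. Qed.
Lemma mv_veq n M u u' : veq n u u' -> mv n M u = mv n M u'.
Proof. intros H; extensionality i; unfold mv; apply rsum_ext; intros; rewrite H; auto. Qed.
Lemma mv_ident n u : veq n (mv n ident u) u.
Proof. intros i Hi; unfold mv; apply rsum_ident; auto. Qed.
Lemma mv_mm n M N u : mv n (mm n M N) u = mv n M (mv n N u).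
Proof. extensionality i; unfold mv, mm.
 transitivity (rsum n (fun j => rsum n (fun k => M i k * N k j * u j))).
 - apply rsum_ext; intros; rewrite <- rsum_mulr; reflexivity.
 - rewrite rsum_swap. apply rsum_ext; intros; rewrite <- rsum_scal; apply rsum_ext; intros; ring. Qed.

Definition bf n M u v := ip n (mv n M u) v.
Lemma normsq_bf n M y : normsq n M y = bf n M y y.
Proof. reflexivity. Qed.
Lemma bf_addl n M u v w : bf n M (vadd u v) w = bf n M u w + bf n M v w.
Proof. unfold bf; rewrite mv_vadd, ip_addl; auto. Qed.
Lemma bf_subl n M u v w : bf n M (vsub u v) w = bf n M u w - bf n M v w.
Proof. unfold bf; rewrite mv_vsub, ip_subl; auto. Qed.
Lemma bf_scalel n M c u w : bf n M (vscale c u) w = c * bf n M u w.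
Proof. unfold bf; rewrite mv_vscale, ip_scalel; auto. Qed.
Lemma bf_addr n M u v w : bf n M w (vadd u v) = bf n M w u + bf n M w v.
Proof. unfold bf; rewrite ip_addr; auto. Qed.
Lemma bf_subr n M u v w : bf n M w (vsub u v) = bf n M w u - bf n M w v.
Proof. unfold bf; rewrite ip_subr; auto. Qed.
Lemma bf_scaler n M c u w : bf n M w (vscale c u) = c * bf n M w u.
Proof. unfold bf; rewrite ip_scaler; auto. Qed.
Lemma bf_madd n M N u v : bf n (madd M N) u v = bf n M u v + bf n N u v.
Proof. unfold bf; rewrite mv_madd, ip_addl; auto. Qed.
Lemma bf_mscale n c M u v : bf n (mscale c M) u v = c * bf n M u v.
Proof. unfold bf; rewrite mv_mscale, ip_scalel; auto. Qed.
Lemma bf_ident n u v : bf n ident u v = ip n u v.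
Proof. unfold bf; apply ip_ext; [apply mv_ident | intros ? ?; auto]. Qed.
Lemma bf_meq n M N u v : meq n M N -> bf n M u v = bf n N u v.
Proof. intros H; unfold bf; apply ip_ext; [|intros ? ?; auto].
 intros i Hi; unfold mv; apply rsum_ext; intros; rewrite H; auto. Qed.
Lemma bf_adj n M u v : bf n (adj M) u v = bf n M v u.
Proof. unfold bf, ip, mv, adj.
 transitivity (rsum n (fun i => rsum n (fun j => M j i * u j * v i))).
 - apply rsum_ext; intros; rewrite <- rsum_mulr; reflexivity.
 - rewrite rsum_swap. apply rsum_ext; intros; rewrite <- rsum_mulr; apply rsum_ext; intros; ring. Qed.
Lemma bf_sym n M u v : meq n M (adj M) -> bf n M u v = bf n M v u.
Proof. intros H; rewrite (bf_meq n M (adj M)) by auto; apply bf_adj. Qed.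

Lemma bf_cs n M a b t : (forall u v, bf n M u v = bf n M v u) -> (forall u, 0 <= bf n M u u) ->
  t > 0 -> 2 * bf n M a b <= t * bf n M a a + bf n M b b / t.
Proof. intros Hs Hp Ht. pose proof (Hp (vsub (vscale t a) b)) as H.
 rewrite bf_subl, !bf_subr, !bf_scalel, !bf_scaler, (Hs b a) in H.
 apply (Rmult_le_reg_l t); auto. field_simplify; [|lra]. nra. Qed.

Lemma bf_mm n M N u v : bf n (mm n M N) u v = bf n M (mv n N u) v.
Proof. unfold bf; rewrite mv_mm; auto. Qed.

Lemma final_ineq (tau a1 V1 a0 V0 Pv Pw Z : R) : tau > 0 -> 0 <= a1 -> 0 <= a0 -> 0 <= V0 -> 0 <= Z ->
  (a1 + V1) - (a0 + V0) = tau * (Pv + Pw) ->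
  2 * Pw <= 1 * Z + V0 / 1 ->
  2 * Pv <= (1 + tau/2) * Z + V1 / (1 + tau/2) ->
  a1 + V1 <= exp tau * (a0 + V0) + exp (3/4 * tau) * tau * Z.
Proof.
  intros Ht Ha1 Ha0 HV0 HZ HX H2 H3.
  assert (HV1X : V1 <= a1 + V1) by lra. assert (HY : 0 <= a0 + V0) by lra.
  assert (HV0Y : V0 <= a0 + V0) by lra.
  remember (a1 + V1) as X. remember (a0 + V0) as Y. remember (1 + tau/2) as s.
  assert (Hs : s > 0) by lra.
  assert (HV1 : V1 / s <= X / s) by (apply Rmult_le_compat_r; [left; apply Rinv_0_lt_compat; auto | lra]).
  assert (H2' : tau * (2 * Pw) <= tau * (1 * Z + V0 / 1)) by (apply Rmult_le_compat_l; lra).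
  assert (H3' : tau * (2 * Pv) <= tau * (s * Z + V1 / s)) by (apply Rmult_le_compat_l; lra).
  assert (HV0' : V0 / 1 = V0) by field.
  assert (Htv : tau * (V1 / s) <= tau * (X / s)) by (apply Rmult_le_compat_l; lra).
  assert (H : X <= Y + tau/2*(Z+Y) + tau/2*(s*Z + X/s)) by nra.
  assert (Hxs : X / s = X - tau/2*(X/s)) by (subst s; field; lra).
  assert (H4 : X / s <= s * Y + tau/2*(1+s)*Z) by (subst s; nra).
  assert (H5 : X <= s * (s * Y + tau/2*(1+s)*Z)).
  { replace X with (s * (X/s)) at 1 by (field; lra). apply Rmult_le_compat_l; lra. }
  assert (E2 : 1 + tau/2 <= exp (tau/2)) by (left; apply exp_ineq1; lra).
  assert (E4 : 1 + tau/4 <= exp (tau/4)) by (left; apply exp_ineq1; lra).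
  assert (Ee : exp tau = exp (tau/2) * exp (tau/2)) by (rewrite <- exp_plus; f_equal; field).
  assert (Ef : exp (3/4*tau) = exp (tau/2) * exp (tau/4)) by (rewrite <- exp_plus; f_equal; field).
  assert (S1 : s * s <= exp (tau/2) * exp (tau/2)) by (subst s; apply Rmult_le_compat; lra).
  assert (S2 : s * (1 + tau/4) <= exp (tau/2) * exp (tau/4)) by (subst s; apply Rmult_le_compat; lra).
  assert (T1 : s * s * Y <= exp (tau/2) * exp (tau/2) * Y) by (apply Rmult_le_compat_r; lra).
  assert (T2 : s * (1 + tau/4) * (tau * Z) <= exp (tau/2) * exp (tau/4) * (tau * Z))
    by (apply Rmult_le_compat_r; nra).
  rewrite Ee, Ef.
  assert (Heq : s * (s * Y + tau/2*(1+s)*Z) = s * s * Y + s * (1 + tau/4) * (tau * Z)) by (subst s; field).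
  nra.
Qed.

Theorem theorem4 (n : nat) (A A1 A2 : mat) (sigma tau : R)
  (y phi : nat -> vec)
  (hA : meq n A (madd A1 A2))
  (hA12 : meq n A1 (adj A2))
  (hAsym : meq n A (adj A))
  (hApos : pos_def n A)
  (hsigma : sigma >= 1/4)
  (htau : tau > 0)
  (hscheme : forall k : nat, (1 <= k)%nat ->
     veq n (vadd (mv n (Gop n sigma tau A1 A2)
                      (vscale (/ tau ^ 2)
                         (vadd (vsub (y (S k)) (vscale 2 (y k))) (y (k - 1)%nat))))
                 (mv n A (y k)))
           (phi k)) :
  meq n (Rop n sigma tau A A1 A2) (adj (Rop n sigma tau A A1 A2)) /\
  op_ge n (Rop n sigma tau A A1 A2) ident /\
  (forall k : nat, (1 <= k)%nat ->
     energy n tau A (Rop n sigma tau A A1 A2) y (S k)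
     <= exp tau * energy n tau A (Rop n sigma tau A A1 A2) y k
        + exp (3/4 * tau) * tau * normsq_inv n (Rop n sigma tau A A1 A2) (phi k)).
Proof.
  assert (HAs : forall u v, bf n A u v = bf n A v u) by (intros; apply bf_sym; auto).
  assert (HK : forall u v, bf n (mm n A1 A2) u v = ip n (mv n A2 u) (mv n A2 v)).
  { intros u v. rewrite bf_mm. rewrite (bf_meq n A1 (adj A2)) by auto. rewrite bf_adj.
    unfold bf. apply ip_comm. }
  assert (HKs : forall u v, bf n (mm n A1 A2) u v = bf n (mm n A1 A2) v u).
  { intros; rewrite !HK; apply ip_comm. }
  assert (HKp : forall u, 0 <= bf n (mm n A1 A2) u u).
  { intros; rewrite HK; apply ip_self_nonneg. }
  assert (HAp : forall u, 0 <= bf n A u u).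
  { intros u. destruct (classic (exists i, (i < n)%nat /\ u i <> 0)) as [Hc|Hc].
    - left; apply hApos; auto.
    - right. unfold bf, ip. symmetry. transitivity (rsum n (fun _ => 0)); [|apply rsum_zero]. apply rsum_ext. intros i Hi.
      destruct (Req_dec (u i) 0) as [E|E]; [rewrite E; ring|].
      exfalso; apply Hc; exists i; auto. }
  assert (Hc1 : 0 <= (sigma - 1/4) * tau ^ 2) by (apply Rmult_le_pos; [lra | apply pow_le; lra]).
  assert (Hc2 : 0 <= sigma ^ 2 * tau ^ 4) by (apply Rmult_le_pos; apply pow_le; lra).
  set (Rm := Rop n sigma tau A A1 A2).
  assert (HR : forall u v, bf n Rm u v = ip n u v + (sigma - 1/4) * tau ^ 2 * bf n A u v
                                        + sigma ^ 2 * tau ^ 4 * bf n (mm n A1 A2) u v).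
  { intros; unfold Rm, Rop. rewrite !bf_madd, !bf_mscale, bf_ident. ring. }
  assert (HRs : forall u v, bf n Rm u v = bf n Rm v u).
  { intros; rewrite !HR, ip_comm, HAs, HKs. ring. }
  assert (HRge : forall u, ip n u u <= bf n Rm u u).
  { intros u; rewrite HR. pose proof (HAp u); pose proof (HKp u).
    assert (0 <= (sigma - 1/4) * tau ^ 2 * bf n A u u) by (apply Rmult_le_pos; auto).
    assert (0 <= sigma ^ 2 * tau ^ 4 * bf n (mm n A1 A2) u u) by (apply Rmult_le_pos; auto).
    lra. }
  assert (HRp : forall u, 0 <= bf n Rm u u).
  { intros u; pose proof (HRge u); pose proof (ip_self_nonneg n u); lra. }
  split; [|split].
  -
    intros i j Hi Hj. unfold Rm, Rop, adj, madd, mscale, mm, ident.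
    rewrite (hAsym i j Hi Hj). unfold adj. rewrite Nat.eqb_sym.
    replace (rsum n (fun k => A1 i k * A2 k j)) with (rsum n (fun k => A1 j k * A2 k i)); [reflexivity|].
    apply rsum_ext; intros k Hk. rewrite (hA12 i k Hi Hk), (hA12 j k Hj Hk). unfold adj. ring.
  - intros u. fold Rm. change (bf n Rm u u >= bf n ident u u). rewrite bf_ident.
    pose proof (HRge u); lra.
  - intros k Hk.
    pose proof (hscheme k Hk) as Hs.
    unfold energy. replace (S k - 1)%nat with k by lia. rewrite !normsq_bf.
    set (p := y (S k)) in *. set (q := y k) in *. set (r := y (k - 1)%nat) in *.
    set (z := minv_apply n Rm (phi k)).
    assert (Hz : veq n (mv n Rm z) (phi k)).
    { unfold z, minv_apply. apply epsilon_spec. apply MX.exists_sol.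
      intros u Hu i Hi.
      assert (H0 : bf n Rm u u = 0).
      { unfold bf. rewrite (ip_ext n (mv n Rm u) (fun _ => 0) u u Hu (fun _ _ => eq_refl)).
        unfold ip. transitivity (rsum n (fun _ => 0)); [apply rsum_ext; intros; ring | apply rsum_zero]. }
      pose proof (HRge u); pose proof (ip_self_nonneg n u).
      assert (Hi0 : u i * u i = 0).
      { apply (rsum_eq0 n (fun i => u i * u i)); auto.
        - intros; apply Rle_0_sqr.
        - change (ip n u u = 0); lra. }
      cbv beta. destruct (Rmult_integral _ _ Hi0); auto. }
    assert (Hzv : forall v, ip n (mv n Rm z) v = ip n (phi k) v).
    { intros v; apply ip_ext; auto. intros ? ?; auto. }
    assert (HZ : bf n Rm z z = normsq_inv n Rm (phi k)).
    { unfold bf, normsq_inv. fold z. rewrite Hzv. apply ip_comm. }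
    assert (Heq : ip n (phi k) (vsub p r) =
      bf n (Gop n sigma tau A1 A2) (vscale (/ tau ^ 2) (vadd (vsub p (vscale 2 q)) r)) (vsub p r)
      + bf n A q (vsub p r)).
    { rewrite <- (ip_ext n _ _ (vsub p r) (vsub p r) Hs (fun _ _ => eq_refl)).
      rewrite ip_addl. reflexivity. }
    assert (HG : forall u v, bf n (Gop n sigma tau A1 A2) u v =
       ip n u v + sigma * tau ^ 2 * bf n A u v + (sigma * tau ^ 2) ^ 2 * bf n (mm n A1 A2) u v).
    { intros u v. unfold Gop. rewrite bf_mm, bf_madd, bf_mscale, bf_ident.
      rewrite mv_madd, mv_mscale, ip_addl, ip_scalel, bf_addl, bf_scalel.
      rewrite (ip_ext n (mv n ident u) u v v (mv_ident n u) (fun _ _ => eq_refl)).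
      assert (E1 : bf n A1 (mv n ident u) v = bf n A1 u v).
      { unfold bf; rewrite (mv_veq n A1 (mv n ident u) u (mv_ident n u)); auto. }
      rewrite E1, <- (bf_mm n A1 A2).
      change (ip n (mv n A2 u) v) with (bf n A2 u v).
      rewrite (bf_meq n A (madd A1 A2)) by auto. rewrite bf_madd. ring. }
    assert (Hid : (bf n A (vscale (1/2) (vadd p q)) (vscale (1/2) (vadd p q))
                   + bf n Rm (vscale (/tau) (vsub p q)) (vscale (/tau) (vsub p q)))
                - (bf n A (vscale (1/2) (vadd q r)) (vscale (1/2) (vadd q r))
                   + bf n Rm (vscale (/tau) (vsub q r)) (vscale (/tau) (vsub q r)))
                = ip n (phi k) (vsub p r)).
    { rewrite Heq, !HR, !HG.
      rewrite ?bf_scalel, ?bf_scaler, ?ip_scalel, ?ip_scaler.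
      rewrite ?bf_addl, ?bf_subl, ?ip_addl, ?ip_subl.
      rewrite ?bf_scalel, ?bf_scaler, ?ip_scalel, ?ip_scaler.
      rewrite ?bf_addr, ?bf_subr, ?ip_addr, ?ip_subr.
      rewrite ?bf_scalel, ?bf_scaler, ?ip_scalel, ?ip_scaler.
      rewrite ?(ip_comm n q p), ?(ip_comm n r p), ?(ip_comm n r q).
      rewrite ?(HAs q p), ?(HAs r p), ?(HAs r q).
      rewrite ?(HKs q p), ?(HKs r p), ?(HKs r q).
      field. lra. }
    assert (HP : bf n Rm z (vscale (/tau) (vsub p q)) + bf n Rm z (vscale (/tau) (vsub q r))
                 = / tau * ip n (phi k) (vsub p r)).
    { unfold bf. rewrite !Hzv, !ip_scaler, !ip_subr. ring. }
    rewrite <- HZ.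
    apply (final_ineq tau _ _ _ _ (bf n Rm z (vscale (/tau) (vsub p q)))
                                  (bf n Rm z (vscale (/tau) (vsub q r)))); auto.
    + rewrite Hid, HP. field. lra.
    + apply bf_cs; auto; lra.
    + apply bf_cs; auto; lra.
Qed.
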